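(* Let $n \ge 3$ be an integer. For a binary string $y$ let $r_y$ be its number of runs, $u_y$ its number of runs of length one, and $b_y$ the number of runs of length one occurring at the start or end of $y$. Define \[ f'(r,u,b) = \begin{cases} \frac{1}{r}\left(1 - \frac{u-b}{r^2}\right) & \text{if } u-b \ge 2,\\ \frac{1}{r} & \text{if } u-b \le 1,\end{cases} \] and let $z \in \mathbb{R}^{[2]^{n-1}}$ be given by $z_y = f'(r_y,u_y,b_y)$. Then \[ \sum_{y \in [2]^{n-1}} z_y \ \ge\ \frac{2^n - 2}{n+1}\left(1 + \frac{1}{n-1} - \frac{3}{(n-1)(n-2)}\right). \]
   Context: $[2]=\{0,1\}$ and $[2]^m$ is the set of binary strings of length $m$. A run of a string is a maximal block of consecutive equal symbols. *)

(* Defs.v *)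
From mathcomp Require Import all_boot all_order all_algebra.
Set Implicit Arguments. Unset Strict Implicit. Unset Printing Implicit Defensive.
Import Order.TTheory GRing.Theory Num.Theory.

Fixpoint run_lengths (s : seq bool) : seq nat :=
  match s with
  | [::] => [::]
  | x :: s' =>
      match s' with
      | [::] => [:: 1%N]
      | y :: _ =>
          let rl := run_lengths s' in
          if x == y then (head 0%N rl).+1 :: behead rl else 1%N :: rl
      end
  end.

Definition nruns (s : seq bool) : nat := size (run_lengths s).
Definition nruns1 (s : seq bool) : nat := count (pred1 1%N) (run_lengths s).
Definition nruns1_ends (s : seq bool) : nat :=
  let rl := run_lengths s in
  count (fun i => (nth 0%N rl i == 1%N) && ((i == 0%N) || (i == (size rl).-1)))
        (iota 0 (size rl)).

Local Open Scope ring_scope.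

Definition fprime (R : realFieldType) (r u b : nat) : R :=
  if (2 <= u - b)%N then (r%:R)^-1 * (1 - (u - b)%:R / (r%:R ^+ 2))
  else (r%:R)^-1.

Definition zval (R : realFieldType) (s : seq bool) : R :=
  fprime R (nruns s) (nruns1 s) (nruns1_ends s).

(* Main.v *)
Require Import Defs.
From mathcomp Require Import all_boot all_order all_algebra.
From mathcomp Require Import ring lra zify.
Import Order.TTheory GRing.Theory Num.Theory.
Set Implicit Arguments. Unset Strict Implicit.

Lemma sum_bin N : (\sum_(i < N.+1) 'C(N, i) = 2 ^ N)%N.
Proof.
have := expnDn 1 1 N; rewrite addn1 => ->.
by apply: eq_bigr => i _; rewrite !exp1n !muln1.
Qed.

Definition fs (s : seq bool) : nat := (head 0%N (run_lengths s) == 1%N).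
Definition vs (s : seq bool) : nat := (nruns1 s - fs s)%N.

Lemma rl_pos y t : (0 < head 0%N (run_lengths (y :: t)))%N /\ (0 < size (run_lengths (y :: t)))%N.
Proof.
elim: t y => [|z t IH] y //=.
have [H1 H2] := IH z.
by case: (y == z) => //=; case: (run_lengths (z :: t)) H1 H2.
Qed.

Lemma rl_cons x y t : run_lengths (x :: y :: t) =
  if x == y then (head 0%N (run_lengths (y :: t))).+1 :: behead (run_lengths (y :: t))
  else 1%N :: run_lengths (y :: t).
Proof. by []. Qed.

Lemma nruns_cons x y t : nruns (x :: y :: t) = (nruns (y :: t) + (x != y))%N.
Proof.
rewrite /nruns rl_cons; have [_ H2] := rl_pos y t; move: H2.
case: (run_lengths (y :: t)) => [|h l] //= _.
by case: (x == y) => /=; rewrite ?addn0 ?addn1.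
Qed.

Lemma fs_cons x y t : fs (x :: y :: t) = (x != y).
Proof.
rewrite /fs rl_cons; have [H1 _] := rl_pos y t; move: H1.
case: (run_lengths (y :: t)) => [|h l] //= H1.
by case: (x == y) => //=; case: h H1.
Qed.

Lemma vs_cons x y t : vs (x :: y :: t) = (vs (y :: t) + (x != y) * fs (y :: t))%N.
Proof.
rewrite /vs fs_cons /nruns1 rl_cons /fs; have [H1 H2] := rl_pos y t; move: H1 H2.
case: (run_lengths (y :: t)) => [|h l] //= H1 _.
by case: (x == y); case: h H1 => // [[|h]] _ /=; lia.
Qed.

Lemma fs_le_b s : (fs s <= nruns1_ends s)%N.
Proof.
rewrite /fs /nruns1_ends.
case: (run_lengths s) => [|h l] //=.
by case: (h == 1%N).
Qed.

Lemma nruns_pos y t : (0 < nruns (y :: t))%N.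
Proof. by have [] := rl_pos y t. Qed.

Section Sums.
Variable R : realFieldType.
Local Open Scope ring_scope.

Definition Tc L (G : nat -> R) := \sum_(k < L.+1) ('C(L, k))%:R * G k.+1.

Lemma big_tuple_cons L (F : seq bool -> R) :
  \sum_(t : L.+1.-tuple bool) F t = \sum_(x : bool) \sum_(t : L.-tuple bool) F (x :: t).
Proof.
rewrite pair_big /=.
rewrite (reindex (fun p : bool * L.-tuple bool => [tuple of p.1 :: p.2])) /=.
  by apply: eq_big.
exists (fun t : L.+1.-tuple bool => (thead t, [tuple of behead t])) => [[x t] _ | t _] /=.
  by congr (_, _); apply: val_inj.
by rewrite [t in RHS]tuple_eta.
Qed.

Lemma sum_bool (F : bool -> R) x : \sum_y F y = F x + F (~~ x).
Proof. by rewrite big_bool; case: x => //=; rewrite addrC. Qed.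

Lemma sum_tuple0 (F : seq bool -> R) : \sum_(t : 0.-tuple bool) F t = F [::].
Proof.
rewrite (eq_bigr (fun _ => F [::])) => [|t _]; last by rewrite (tuple0 t).
by rewrite sumr_const card_tuple expn0.
Qed.

Lemma cons_split L (H : seq bool -> R) x :
  \sum_(t : L.+1.-tuple bool) H (x :: t) =
  \sum_(t : L.-tuple bool) H (x :: x :: t) + \sum_(t : L.-tuple bool) H (x :: ~~ x :: t).
Proof.
rewrite (big_tuple_cons L (fun t => H (x :: t))) (sum_bool _ x) //.
Qed.

Definition T L G x := \sum_(t : L.-tuple bool) G (nruns (x :: t)) : R.
Definition W L G x := \sum_(t : L.-tuple bool) (vs (x :: t))%:R * G (nruns (x :: t)) : R.
Definition Fs L G x := \sum_(t : L.-tuple bool) (fs (x :: t))%:R * G (nruns (x :: t)) : R.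

Lemma neqN x : (x != ~~ x). Proof. by case: x. Qed.

Lemma T_rec L G x : T L.+1 G x = T L G x + T L (fun j => G j.+1) (~~ x).
Proof.
rewrite /T (cons_split L (fun s => G (nruns s))); congr (_ + _); apply: eq_bigr => t _.
  by rewrite nruns_cons eqxx addn0.
by rewrite nruns_cons neqN addn1.
Qed.

Lemma Tc_ext L G1 G2 : (forall j, G1 j = G2 j) -> Tc L G1 = Tc L G2.
Proof. by move=> H; apply: eq_bigr => k _; rewrite H. Qed.

Lemma Tc_add L G1 G2 : Tc L (fun j => G1 j + G2 j) = Tc L G1 + Tc L G2.
Proof. by rewrite /Tc -big_split; apply: eq_bigr => k _; rewrite mulrDr. Qed.

Lemma Tc_rec L G : Tc L.+1 G = Tc L G + Tc L (fun j => G j.+1).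
Proof.
rewrite /Tc big_ord_recl bin0 addrC.
rewrite (eq_bigr (fun i : 'I_L.+1 => ('C(L, i.+1))%:R * G i.+2 + ('C(L, i))%:R * G i.+2));
  last by move=> i _; rewrite /bump /= binS natrD mulrDl.
rewrite big_split /= addrAC; congr (_ + _).
rewrite [in RHS]big_ord_recl bin0 [in RHS]addrC; congr (_ + _).
rewrite big_ord_recr /= bin_small // mul0r addr0.
by apply: eq_bigr.
Qed.

Lemma T_closed L : forall G x, T L G x = Tc L G.
Proof.
elim: L => [|L IH] G x.
  by rewrite /T (sum_tuple0 (fun s => G (nruns (x :: s)))) /Tc big_ord1 /= mul1r.
by rewrite T_rec !IH Tc_rec.
Qed.

Lemma Fs0 G x : Fs 0 G x = G 1%N.
Proof. by rewrite /Fs (sum_tuple0 (fun s => (fs (x :: s))%:R * G (nruns (x :: s)))) mul1r. Qed.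

Lemma Fs_rec L G x : Fs L.+1 G x = T L (fun j => G j.+1) (~~ x).
Proof.
rewrite /Fs (cons_split L (fun s => (fs s)%:R * G (nruns s))).
rewrite big1 ?add0r => [|t _]; last by rewrite fs_cons eqxx mul0r.
by apply: eq_bigr => t _; rewrite fs_cons neqN nruns_cons neqN addn1 mul1r.
Qed.

Lemma W0 G x : W 0 G x = 0.
Proof. by rewrite /W (sum_tuple0 (fun s => (vs (x :: s))%:R * G (nruns (x :: s)))) mul0r. Qed.

Lemma W_rec L G x : W L.+1 G x =
  W L G x + W L (fun j => G j.+1) (~~ x) + Fs L (fun j => G j.+1) (~~ x).
Proof.
rewrite /W /Fs (cons_split L (fun s => (vs s)%:R * G (nruns s))) -addrA; congr (_ + _).
  by apply: eq_bigr => t _; rewrite vs_cons nruns_cons eqxx mul0n !addn0.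
rewrite -big_split; apply: eq_bigr => t _.
by rewrite vs_cons nruns_cons neqN mul1n addn1 natrD mulrDl.
Qed.

Lemma W_closed L : forall G x, W L.+1 G x = Tc L (fun j => j%:R * G j.+1).
Proof.
elim: L => [|L IH] G x.
  by rewrite W_rec !W0 Fs0 /Tc big_ord1 /= !add0r !mul1r.
rewrite W_rec !IH Fs_rec T_closed [in RHS]Tc_rec -addrA; congr (_ + _).
rewrite -Tc_add; apply: Tc_ext => j.
by rewrite -[j.+1]addn1 natrD mulrDl mul1r.
Qed.

End Sums.

Section Final.
Variable R : realFieldType.
Local Open Scope ring_scope.

Lemma nat_ne0 k : (k.+1%:R : R) != 0.
Proof. by rewrite pnatr_eq0. Qed.

Lemma nat_gt0 k : (0 : R) < k.+1%:R.
Proof. by rewrite ltr0n. Qed.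

Lemma Tc_inv N : Tc N (fun j => (j%:R : R)^-1) = ((2 ^ N.+1)%:R - 1) / N.+1%:R.
Proof.
rewrite /Tc (eq_bigr (fun k : 'I_N.+1 => ('C(N.+1, k.+1))%:R / N.+1%:R)); last first.
  move=> k _; apply/eqP; rewrite eqr_div ?nat_ne0 //; apply/eqP.
  have E := congr1 (fun m => m%:R : R) (mul_bin_diag N.+1 k).
  rewrite /= !natrM in E.
  by rewrite mulrC E mulrC.
rewrite -mulr_suml; congr (_ * _).
have E := sum_bin N.+1; rewrite big_ord_recl bin0 in E.
rewrite -natr_sum -E natrD mulr1n addrAC subrr add0r.
by congr (_%:R); apply: eq_bigr.
Qed.

Lemma term_le k : (k.+1%:R : R) * (k.+2%:R ^+ 3)^-1 <= (k.+1%:R * k.+2%:R)^-1.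
Proof.
rewrite -[_ * _^-1]/(_ / _) ler_pdivrMr ?exprn_gt0 ?nat_gt0 //.
rewrite mulrC ler_pdivlMr ?mulr_gt0 ?nat_gt0 //.
rewrite -!natrX -!natrM ler_nat.
by nia.
Qed.

Lemma Tc_bound N : Tc N (fun j => (j%:R : R) * (j.+1%:R ^+ 3)^-1)
   <= ((2 ^ N.+2)%:R - 1) / (N.+1%:R * N.+2%:R).
Proof.
rewrite /Tc.
apply: (@le_trans _ _ (\sum_(k < N.+1) ('C(N.+2, k.+2))%:R / (N.+1%:R * N.+2%:R))).
  apply: ler_sum => k _.
  have -> : ('C(N.+2, k.+2))%:R / (N.+1%:R * N.+2%:R) = ('C(N, k))%:R / (k.+1%:R * k.+2%:R) :> R.
    apply/eqP; rewrite eqr_div ?mulf_neq0 ?nat_ne0 //; apply/eqP.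
    rewrite -!natrM; congr (_%:R).
    have E1 := mul_bin_diag N.+1 k; have E2 := mul_bin_diag N.+2 k.+1.
    rewrite /= in E1 E2.
    have E1' := congr1 (muln N.+2) E1; have E2' := congr1 (muln k.+1) E2.
    rewrite /= in E1' E2'; nia.
  by apply: ler_wpM2l; [exact: ler0n | exact: term_le].
rewrite -mulr_suml; apply: ler_wpM2r.
  by rewrite invr_ge0 mulr_ge0 ?ler0n.
have E := sum_bin N.+2; rewrite big_ord_recl bin0 big_ord_recl in E.
rewrite -natr_sum lerBrDr -[1 in X in X <= _]/(1%:R) -natrD ler_nat -E.
by rewrite addnC leq_add2l; apply: leq_addl.
Qed.

Lemma zbound s : (0 < nruns s)%N ->
  (nruns s)%:R^-1 - (vs s)%:R * ((nruns s)%:R ^+ 3)^-1 <= zval R s.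
Proof.
move=> hr; rewrite /zval /fprime.
have hfb := fs_le_b s.
have rp : (0 : R) < (nruns s)%:R by rewrite ltr0n.
have h0 : (0 : R) <= (vs s)%:R * ((nruns s)%:R ^+ 3)^-1.
  by rewrite mulr_ge0 ?ler0n // invr_ge0 exprn_ge0 // ltW.
case: ifP => _; last by lra.
have -> : (nruns s)%:R^-1 * (1 - (nruns1 s - nruns1_ends s)%:R / (nruns s)%:R ^+ 2)
   = (nruns s)%:R^-1 - (nruns1 s - nruns1_ends s)%:R * ((nruns s)%:R ^+ 3)^-1 :> R.
  by field; rewrite gt_eqF.
apply: lerB => //; apply: ler_wpM2r.
  by rewrite invr_ge0 exprn_ge0 // ltW.
by rewrite ler_nat /vs leq_sub2l.
Qed.

End Final.

Local Open Scope ring_scope.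

Theorem lemma2 (R : realFieldType) (n : nat) (hn : (3 <= n)%N) :
  \sum_(y : (n.-1).-tuple bool) zval R y >=
  ((2 ^ n)%:R - 2) / (n.+1)%:R *
    (1 + ((n.-1)%:R)^-1 - 3 / ((n.-1)%:R * (n.-2)%:R)).
Proof.
case: n hn => [|[|[|L]]] // _.
have H1 : \sum_(y : L.+2.-tuple bool)
   ((nruns y)%:R^-1 - (vs y)%:R * ((nruns y)%:R ^+ 3)^-1) <= \sum_(y : L.+2.-tuple bool) zval R y.
  apply: ler_sum => y _; apply: zbound.
  by rewrite (tuple_eta y) /=; apply: nruns_pos.
apply: le_trans H1.
rewrite (big_tuple_cons L.+1 (fun s => (nruns s)%:R^-1 - (vs s)%:R * ((nruns s)%:R ^+ 3)^-1 : R)).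
rewrite (eq_bigr (fun x => T L.+1 (fun j => (j%:R : R)^-1) x - W L.+1 (fun j => ((j%:R : R) ^+ 3)^-1) x)); last first.
  by move=> x _; rewrite sumrB.
rewrite (eq_bigr (fun x => Tc L.+1 (fun j => (j%:R : R)^-1) - Tc L (fun j => (j%:R : R) * (j.+1%:R ^+ 3)^-1))); last first.
  by move=> x _; rewrite T_closed W_closed.
rewrite (sum_bool _ true) /= Tc_inv.
have hX := @Tc_bound R L.
set X := Tc L _ in hX *.
set P := (2 ^ L.+2)%:R : R in hX *.
rewrite expnS natrM -/P.
have hL : (0 : R) <= L%:R by exact: ler0n.
suff -> : (2%:R * P - 2) / L.+4%:R * (1 + L.+2%:R^-1 - 3 / (L.+2%:R * L.+1%:R))
   = 2 * ((P - 1) / L.+2%:R - (P - 1) / (L.+1%:R * L.+2%:R)) :> R.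
  move: hX; set A := (P - 1) / _; set B := (P - 1) / _; move=> hX; lra.
rewrite !mulrS !mulr0n; field.
apply/and3P; split; apply/negbT/gt_eqF; lra.
Qed.
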